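(* For all containers $F$ and $G$ there are equivalences of containers (i) $\partial(F+G)\simeq \partial F+\partial G$ (sum rule), and (ii) $\partial(F\times G)\simeq (\partial F\times G)+(F\times\partial G)$ (Leibniz rule).
   Context: Homotopy Type Theory. A point $a:A$ is isolated if $a=b$ is decidable for all $b:A$; $A^{\circ}$ is the subtype of isolated points; $A\setminus a_0:=\sum_{a:A}\neg(a_0=a)$. A container $(S\triangleleft P)$ is a type $S$ with a family $P:S\to\mathsf{Type}$ (no truncation assumptions). A cartesian morphism $(S\triangleleft P)\multimap(T\triangleleft Q)$ is a pair $(f,u)$ with $f:S\to T$, $u:\prod_s Q_{fs}\simeq P_s$; it is an equivalence of containers if $f$ is an equivalence. Operations: $(S\triangleleft P)\times(T\triangleleft Q):=(S\times T\triangleleft\lambda(s,t).\,P_s+Q_t)$; $(S\triangleleft P)+(T\triangleleft Q):=(S+T\triangleleft \lambda x.\,P_s \text{ if } x=\mathrm{inl}(s),\ Q_t\text{ if }x=\mathrm{inr}(t))$; $\partial(S\triangleleft P):=\big(\sum_{s:S}(P_s)^{\circ}\triangleleft\lambda(s,p).\,P_s\setminus p\big)$. *)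

(* Defs.v *)
(* Homotopy-type-theoretic notions, with a proof-relevant
   identity type living in Type (no UIP / truncation assumed). *)

Inductive paths {A : Type} (a : A) : A -> Type :=
  idpath : paths a a.
Arguments idpath {A a}.

Definition neg (A : Type) : Type := A -> Empty_set.

Definition Dec (A : Type) : Type := (A + neg A)%type.

Definition isolated {A : Type} (a : A) : Type := forall b : A, Dec (paths a b).

Definition isolated_pts (A : Type) : Type := { a : A & isolated a }.

Definition remove (A : Type) (a0 : A) : Type := { a : A & neg (paths a0 a) }.

Definition isequiv {A B : Type} (f : A -> B) : Type :=
  ({ g : B -> A & forall b, paths (f (g b)) b } *
   { h : B -> A & forall a, paths (h (f a)) a })%type.

Definition Equiv (A B : Type) : Type := { f : A -> B & isequiv f }.

Record Container : Type := mkContainer { Sh : Type ; Pos : Sh -> Type }.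

Definition CartMor (F G : Container) : Type :=
  { f : Sh F -> Sh G & forall s : Sh F, Equiv (Pos G (f s)) (Pos F s) }.

Definition CEquiv (F G : Container) : Type :=
  { f : Sh F -> Sh G &
    (isequiv f * forall s : Sh F, Equiv (Pos G (f s)) (Pos F s))%type }.

Definition cprod (F G : Container) : Container :=
  mkContainer (Sh F * Sh G)%type
              (fun st => (Pos F (fst st) + Pos G (snd st))%type).

Definition csum (F G : Container) : Container :=
  mkContainer (Sh F + Sh G)%type
              (fun x => match x with
                        | inl s => Pos F s
                        | inr t => Pos G t
                        end).

Definition cderiv (F : Container) : Container :=
  mkContainer { s : Sh F & isolated_pts (Pos F s) }
              (fun sp => remove (Pos F (projT1 sp)) (projT1 (projT2 sp))).

(* Main.v *)
Require Import Defs.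
From Stdlib Require Import FunctionalExtensionality.

Definition e2p {A} {x y : A} (e : x = y) : paths x y :=
  match e in _ = z return paths x z with eq_refl => idpath end.

Definition mkEquiv {A B} (f : A -> B) (g : B -> A)
  (H1 : forall b, f (g b) = b) (H2 : forall a, g (f a) = a) : Equiv A B :=
  existT _ f (existT _ g (fun b => e2p (H1 b)), existT _ g (fun a => e2p (H2 a))).

Lemma neg_eq X (f g : neg X) : f = g.
Proof. apply functional_extensionality; intro x; destruct (f x). Qed.

Definition ap {A B} (f : A -> B) {x y} (p : paths x y) : paths (f x) (f y) :=
  match p in paths _ z return paths (f x) (f z) with idpath => idpath end.

Section Codes.
Context {A B : Type}.

Definition code_l (a : A) (y : A + B) : Type :=
  match y with inl b => paths a b | inr _ => Empty_set end.
Definition dec_l (a : A) (y : A + B) (q : paths (inl a) y) : code_l a y :=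
  match q in paths _ z return code_l a z with idpath => idpath end.
Definition enc_l (a : A) (y : A + B) : code_l a y -> paths (inl a) y :=
  match y return code_l a y -> paths (inl a) y with
  | inl b => fun c => ap inl c
  | inr _ => fun e => match e with end end.
Lemma enc_dec_l a y (q : paths (inl a) y) : enc_l a y (dec_l a y q) = q.
Proof. destruct q; reflexivity. Qed.
Lemma dec_enc_l a b (c : paths a b) : dec_l a (inl b) (enc_l a (inl b) c) = c.
Proof. destruct c; reflexivity. Qed.

Definition code_r (a : B) (y : A + B) : Type :=
  match y with inr b => paths a b | inl _ => Empty_set end.
Definition dec_r (a : B) (y : A + B) (q : paths (inr a) y) : code_r a y :=
  match q in paths _ z return code_r a z with idpath => idpath end.
Definition enc_r (a : B) (y : A + B) : code_r a y -> paths (inr a) y :=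
  match y return code_r a y -> paths (inr a) y with
  | inr b => fun c => ap inr c
  | inl _ => fun e => match e with end end.
Lemma enc_dec_r a y (q : paths (inr a) y) : enc_r a y (dec_r a y q) = q.
Proof. destruct q; reflexivity. Qed.
Lemma dec_enc_r a b (c : paths a b) : dec_r a (inr b) (enc_r a (inr b) c) = c.
Proof. destruct c; reflexivity. Qed.
End Codes.

Definition decT {X Y} (f : X -> Y) (g : Y -> X) (d : Dec X) : Dec Y :=
  match d with inl x => inl (f x) | inr n => inr (fun y => n (g y)) end.

Lemma decT_rt {X Y} (f : X -> Y) (g : Y -> X) (H : forall x, g (f x) = x) d :
  decT g f (decT f g d) = d.
Proof. destruct d; simpl. now rewrite H. f_equal; apply neg_eq. Qed.

Section Iso.
Context {A B : Type}.

Definition iso_l (a : A) (k : isolated (inl a : A + B)) : isolated a :=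
  fun b => decT (dec_l a (inl b)) (enc_l a (inl b)) (k (inl b)).
Definition iso_l_inv (a : A) (h : isolated a) : isolated (inl a : A + B) :=
  fun y => match y return Dec (paths (inl a) y) with
  | inl b => decT (enc_l a (inl b)) (dec_l a (inl b)) (h b)
  | inr c => inr (fun q => dec_l a (inr c) q) end.
Lemma iso_l_rt1 a h : iso_l a (iso_l_inv a h) = h.
Proof. apply functional_extensionality_dep; intro b; unfold iso_l; simpl.
  apply decT_rt. apply dec_enc_l. Qed.
Lemma iso_l_rt2 a k : iso_l_inv a (iso_l a k) = k.
Proof. apply functional_extensionality_dep; intro y; destruct y as [b|c]; simpl.
  - unfold iso_l. apply decT_rt. intro q; exact (enc_dec_l a (inl b) q).
  - destruct (k (inr c)) as [q|n]. destruct (dec_l a (inr c) q).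
    f_equal; apply neg_eq. Qed.

Definition iso_r (a : B) (k : isolated (inr a : A + B)) : isolated a :=
  fun b => decT (dec_r a (inr b)) (enc_r a (inr b)) (k (inr b)).
Definition iso_r_inv (a : B) (h : isolated a) : isolated (inr a : A + B) :=
  fun y => match y return Dec (paths (inr a) y) with
  | inr b => decT (enc_r a (inr b)) (dec_r a (inr b)) (h b)
  | inl c => inr (fun q => dec_r a (inl c) q) end.
Lemma iso_r_rt1 a h : iso_r a (iso_r_inv a h) = h.
Proof. apply functional_extensionality_dep; intro b; unfold iso_r; simpl.
  apply decT_rt. apply dec_enc_r. Qed.
Lemma iso_r_rt2 a k : iso_r_inv a (iso_r a k) = k.
Proof. apply functional_extensionality_dep; intro y; destruct y as [c|b]; simpl.
  - destruct (k (inl c)) as [q|n]. destruct (dec_r a (inl c) q).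
    f_equal; apply neg_eq.
  - unfold iso_r. apply decT_rt. intro q; exact (enc_dec_r a (inr b) q). Qed.

Definition posL (p : A) : Equiv (remove A p + B) (remove (A + B) (inl p)).
Proof.
  refine (mkEquiv
    (fun x : remove A p + B => match x with
      | inl (existT _ a n) => existT (fun y : A + B => neg (paths (inl p) y)) (inl a) (fun q => n (dec_l p (inl a) q))
      | inr b => existT (fun y : A + B => neg (paths (inl p) y)) (inr b) (fun q => dec_l p (inr b) q) end)
    (fun y : remove (A + B) (inl p) => match y with
      | existT _ (inl a) n => inl (existT _ a (fun r => n (enc_l p (inl a) r)))
      | existT _ (inr b) _ => inr b end) _ _).
  - intros [[a|b] n]; simpl; f_equal; apply neg_eq.
  - intros [[a n]|b]; simpl; f_equal; f_equal; apply neg_eq.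
Defined.

Definition posR (p : B) : Equiv (A + remove B p) (remove (A + B) (inr p)).
Proof.
  refine (mkEquiv
    (fun x : A + remove B p => match x with
      | inr (existT _ a n) => existT (fun y : A + B => neg (paths (inr p) y)) (inr a) (fun q => n (dec_r p (inr a) q))
      | inl b => existT (fun y : A + B => neg (paths (inr p) y)) (inl b) (fun q => dec_r p (inl b) q) end)
    (fun y : remove (A + B) (inr p) => match y with
      | existT _ (inr a) n => inr (existT _ a (fun r => n (enc_r p (inr a) r)))
      | existT _ (inl b) _ => inl b end) _ _).
  - intros [[a|b] n]; simpl; f_equal; apply neg_eq.
  - intros [b|[a n]]; simpl; f_equal; f_equal; apply neg_eq.
Defined.
End Iso.

Definition mkIsequiv {A B} (f : A -> B) (g : B -> A)
  (H1 : forall b, f (g b) = b) (H2 : forall a, g (f a) = a) : isequiv f :=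
  (existT _ g (fun b => e2p (H1 b)), existT _ g (fun a => e2p (H2 a))).

Definition idEquiv (A : Type) : Equiv A A :=
  mkEquiv (fun x => x) (fun x => x) (fun _ => eq_refl) (fun _ => eq_refl).

Definition sumrule (F G : Container) :
  CEquiv (cderiv (csum F G)) (csum (cderiv F) (cderiv G)).
Proof.
  unshelve refine (existT _ (fun x => match x with existT _ y ip =>
     match y as y return isolated_pts (Pos (csum F G) y) -> Sh (csum (cderiv F) (cderiv G)) with
     | inl s => fun ip => inl (existT _ s ip)
     | inr t => fun ip => inr (existT _ t ip) end ip end) (_, _)).
  - refine (mkIsequiv _ (fun z => match z with
      | inl (existT _ s ip) => existT (fun y => isolated_pts (Pos (csum F G) y)) (inl s) ip
      | inr (existT _ t ip) => existT (fun y => isolated_pts (Pos (csum F G) y)) (inr t) ip end) _ _).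
    + intros [[s ip]|[t ip]]; reflexivity.
    + intros [[s|t] ip]; reflexivity.
  - intros [[s|t] ip]; apply idEquiv.
Defined.

Definition leibniz (F G : Container) :
  CEquiv (cderiv (cprod F G)) (csum (cprod (cderiv F) G) (cprod F (cderiv G))).
Proof.
  unshelve refine (existT _ (fun x => match x with existT _ (s, t) (existT _ y h) =>
     match y as y return isolated y -> Sh (csum (cprod (cderiv F) G) (cprod F (cderiv G))) with
     | inl p => fun h => inl (existT _ s (existT _ p (iso_l p h)), t)
     | inr q => fun h => inr (s, existT _ t (existT _ q (iso_r q h))) end h end) (_, _)).
  - refine (mkIsequiv _ (fun z : Sh (csum (cprod (cderiv F) G) (cprod F (cderiv G))) => match z with
      | inl (existT _ s (existT _ p h), t) =>
          existT (fun st => isolated_pts (Pos (cprod F G) st)) (s, t)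
            (existT _ (inl p) (iso_l_inv p h))
      | inr (s, existT _ t (existT _ q h)) =>
          existT (fun st => isolated_pts (Pos (cprod F G) st)) (s, t)
            (existT _ (inr q) (iso_r_inv q h)) end) _ _).
    + intros [[[s [p h]] t]|[s [t [q h]]]]; simpl.
      * now rewrite iso_l_rt1.
      * now rewrite iso_r_rt1.
    + intros [[s t] [[p|q] h]]; simpl.
      * now rewrite iso_l_rt2.
      * now rewrite iso_r_rt2.
  - intros [[s t] [[p|q] h]]; simpl.
    + apply posL.
    + apply posR.
Defined.

Theorem proposition3p14 (F G : Container) :
  (CEquiv (cderiv (csum F G)) (csum (cderiv F) (cderiv G)) *
   CEquiv (cderiv (cprod F G))
          (csum (cprod (cderiv F) G) (cprod F (cderiv G))))%type.
Proof.
  exact (sumrule F G, leibniz F G).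
Qed.
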